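(* Let $q\in(0,1]$. Then $\omega(R(SO_q(3)))=q^{-4}$.
   Context: $R(SO_q(3))$ is the fusion algebra with irreducible objects $I=\mathbb{Z}_+$, unit $0$, trivial involution, product $m\cdot n=\sum_{k=|m-n|}^{m+n}k$, and dimension $d(n)=[2n+1]_q$, where $[x]_q=\frac{q^{-x}-q^x}{q^{-1}-q}$ for $0<q<1$ and $[x]_1=x$. For $A\subseteq I$, $|A|=\sum_{\beta\in A}d(\beta)^2$. A finite generating set is a finite $X\subseteq I$ such that every $\beta\in I$ has nonzero coefficient in some product $x_1\cdots x_n$, $x_i\in X$; $\ell_X(0)=0$, otherwise $\ell_X(\beta)$ is the least such $n\ge1$; $B_X(n)=\{\beta:\ell_X(\beta)\le n\}$; $\omega_X=\lim_n|B_X(n)|^{1/n}$ (exists) and $\omega=\inf_X\omega_X$ over finite generating sets. *)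

(* Defs.v *)
From HB Require Import structures.
From mathcomp Require Import all_boot all_order all_algebra.
From mathcomp Require Import all_classical all_reals all_analysis.
Set Implicit Arguments. Unset Strict Implicit. Unset Printing Implicit Defensive.
Import Order.TTheory GRing.Theory Num.Theory.

(* Elements of the (Z_+-span of the) fusion algebra R(SO_q(3)) with
   irreducibles I = nat are represented as formal sums with nonnegative
   integer coefficients, i.e. multisets of irreducibles given as [seq nat];
   the coefficient of beta in s is [count_mem beta s]. *)

(* m . n = sum_{k=|m-n|}^{m+n} k *)
Definition fus_irr (m n : nat) : seq nat :=
  iota (if (m <= n)%N then n - m else m - n)%N
       ((m + n) - (if (m <= n)%N then n - m else m - n)).+1.

Definition fus_mul (s t : seq nat) : seq nat :=
  flatten [seq fus_irr a b | a <- s, b <- t].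

(* product x_1 ... x_n (empty product = unit 0) *)
Definition fus_prod (xs : seq nat) : seq nat :=
  foldl (fun acc x => fus_mul acc [:: x]) [:: 0] xs.

Fixpoint words (X : seq nat) (k : nat) : seq (seq nat) :=
  match k with
  | 0 => [:: [::]]
  | k'.+1 => [seq x :: w | x <- X, w <- words X k']
  end.

Definition appears_in_len (X : seq nat) (k beta : nat) : bool :=
  has (fun w => beta \in fus_prod w) (words X k).

Definition generating (X : seq nat) : Prop :=
  forall beta : nat, exists2 xs : seq nat,
    all (fun x => x \in X) xs && (0 < size xs) & beta \in fus_prod xs.

(* beta \in B_X(n), i.e. l_X(beta) <= n, where l_X(0) = 0 and otherwise
   l_X(beta) is the least k >= 1 with beta appearing in a length-k word *)
Definition inB (X : seq nat) (n beta : nat) : bool :=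
  (beta == 0) || has (fun k => appears_in_len X k beta) (iota 1 n).

Local Open Scope ring_scope.

Definition qint {R : realType} (q : R) (x : nat) : R :=
  if q == 1 then x%:R else (q ^- x - q ^+ x) / (q^-1 - q).

Definition qdim {R : realType} (q : R) (n : nat) : R := qint q (2 * n).+1.

(* every element of B_X(n) is <= n * max X, so this bounded sum is |B_X(n)| *)
Definition Bbound (X : seq nat) (n : nat) : nat := (n * \max_(x <- X) x).+1.

Definition sizeB {R : realType} (q : R) (X : seq nat) (n : nat) : R :=
  \sum_(beta < Bbound X n | inB X n beta) qdim q beta ^+ 2.

Definition omegaX {R : realType} (q : R) (X : seq nat) : R :=
  limn (fun n : nat => powR (sizeB q X n) (n%:R)^-1).

Definition omega {R : realType} (q : R) : R :=
  inf [set omegaX q X | X in generating].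

(* Main.v *)
Require Import Defs.
From mathcomp Require Import all_boot all_order all_algebra.
From mathcomp Require Import all_classical all_reals all_analysis.
From mathcomp Require Import zify ring lra.
Import Order.TTheory GRing.Theory Num.Theory.

Lemma fus_mulP (s t : seq nat) b :
  reflect (exists a, exists c, [/\ a \in s, c \in t & b \in fus_irr a c])
          (b \in fus_mul s t).
Proof.
apply: (iffP idP).
- rewrite /fus_mul => /flattenP [u /allpairsPdep [a [c [ha hc ->]]]] hb.
  by exists a, c.
- move=> [a [c [ha hc hb]]]; rewrite /fus_mul; apply/flattenP.
  exists (fus_irr a c) => //; apply/allpairsPdep; by exists a, c.
Qed.

Lemma mem_fus_irr a c b : (b \in fus_irr a c) = (if (a <= c)%N then c - a <= b <= c + a else a - c <= b <= a + c)%N.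
Proof.
rewrite /fus_irr mem_iota; case: (leqP a c) => h /=; apply/idP/idP; lia.
Qed.

Lemma top_fus_prod M k acc a : a \in acc ->
  (a + k * M)%N \in foldl (fun acc x => fus_mul acc [:: x]) acc (nseq k M).
Proof.
elim: k acc a => [|k IH] acc a ha /=; first by rewrite mul0n addn0.
have -> : (a + k.+1 * M = (a + M) + k * M)%N by lia.
apply: IH; apply/fus_mulP; exists a, M; split => //; first by rewrite inE.
rewrite mem_fus_irr; case: leqP => _; lia.
Qed.

Lemma top_prod M k : (k * M)%N \in fus_prod (nseq k M).
Proof. by have := @top_fus_prod M k [:: 0%N] 0%N; rewrite add0n; apply. Qed.

Lemma words_nseq X M k : M \in X -> nseq k M \in words X k.
Proof.
move=> hM; elim: k => [|k IH] /=; first by rewrite inE.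
by apply/allpairsPdep; exists M, (nseq k M).
Qed.

Lemma max_in X : X != [::] -> \max_(x <- X) x \in X.
Proof.
elim: X => [//|x X IH] _; rewrite big_cons.
case: (X =P [::]) => [->|/eqP hX]; first by rewrite big_nil maxn0 inE eqxx.
case: (leqP x (\max_(y <- X) y)) => h.
- by rewrite inE (IH hX) orbT.
- by rewrite inE eqxx.
Qed.

Lemma inB_top X n : (0 < n)%N -> inB X n (n * \max_(x <- X) x).
Proof.
move=> hn; rewrite /inB; case: (X =P [::]) => [->|/eqP hX].
  by rewrite big_nil muln0 eqxx.
apply/orP; right; apply/hasP; exists n; first by rewrite mem_iota; lia.
apply/hasP; exists (nseq n (\max_(x <- X) x)).
  by apply: words_nseq; apply: max_in.
exact: top_prod.
Qed.

Lemma zero_foldl xs acc : all (fun x => x == 0%N) xs -> all (fun x => x == 0%N) acc ->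
  all (fun x => x == 0%N) (foldl (fun acc x => fus_mul acc [:: x]) acc xs).
Proof.
elim: xs acc => [|x xs IH] acc //= /andP [/eqP hx hxs] hacc; apply: IH => //.
apply/allP => b /fus_mulP [a [c [ha hc hb]]].
move: hc; rewrite inE hx => /eqP hc; subst c.
move/allP: hacc => /(_ a ha) /eqP ha0; subst a; move: hb; rewrite mem_fus_irr /=; lia.
Qed.

Lemma zero_prod xs : all (fun x => x == 0%N) xs ->
  all (fun x => x == 0%N) (fus_prod xs).
Proof. by move=> h; apply: zero_foldl. Qed.

Lemma gen_max X : generating X -> (1 <= \max_(x <- X) x)%N.
Proof.
move=> hX; case: leqP => // h0; exfalso.
have [xs /andP [hxs _] h1] := hX 1%N.
have : all (fun x => x == 0%N) xs.
  apply/allP => x hx; move/allP: hxs => /(_ x hx) hxX.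
  have := @leq_bigmax_seq _ X (fun _ => true) (fun x => x) x hxX erefl => hle.
  by rewrite -leqn0; exact: leq_trans hle h0.
move/zero_prod/allP => /(_ 1%N h1) //.
Qed.

Lemma gen1 : generating [:: 1%N].
Proof.
move=> [|b].
  by exists [:: 1%N; 1%N].
exists (nseq b.+1 1%N); last by have := top_prod 1 b.+1; rewrite muln1.
rewrite size_nseq andbT; apply/allP => x; by rewrite mem_nseq => /andP [_ /eqP ->].
Qed.
Local Open Scope ring_scope.

Section A.
Variable R : realType.
Implicit Types q : R.

Definition gS q (x : nat) : R := \sum_(i < x.+1) q ^+ (2 * i).

Lemma qint_eq q x : 0 < q -> qint q x.+1 = q^-1 ^+ x * gS q x.
Proof.
move=> q0; rewrite /qint /gS; case: eqP => [->|/eqP q1].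
  rewrite invr1 expr1n mul1r.
  under eq_bigr do rewrite expr1n.
  by rewrite sumr_const card_ord.
have q2 : q ^+ 2 - 1 != 0.
  rewrite subr_eq0; apply/negP => /eqP h.
  have : (q - 1) * (q + 1) = 0 by rewrite (_ : (q - 1) * (q + 1) = q ^+ 2 - 1); [rewrite h subrr | ring].
  move/eqP; rewrite mulf_eq0 subr_eq0 (negbTE q1) /= => /eqP; lra.
have hS : \sum_(i < x.+1) q ^+ (2 * i) = ((q ^+ 2) ^+ x.+1 - 1) / (q ^+ 2 - 1).
  rewrite subrX1 mulrC mulKf //.
  by apply: eq_bigr => i _; rewrite exprM.
rewrite hS exprVn -exprM mulnC exprM.
have qn0 : q != 0 by rewrite gt_eqF.
have qx0 : q ^+ x != 0 by rewrite expf_neq0.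
have qi : q^-1 - q != 0.
  rewrite subr_eq0; apply/negP => /eqP h.
  have : q * q^-1 = q * q by rewrite h.
  rewrite mulfV // => /eqP; rewrite eq_sym -expr2 -subr_eq0 => /eqP h2.
  by move: q2; rewrite h2 eqxx.
rewrite !exprS; field.
rewrite -expr2 q2 qx0 qn0 /=.
by rewrite mulNr -expr2 -opprB oppr_eq0.
Qed.

Lemma invq_ge1 q : 0 < q -> q <= 1 -> 1 <= q^-1.
Proof. by move=> q0 q1; rewrite invf_ge1. Qed.

Lemma gS_ge1 q x : 0 < q -> 1 <= gS q x.
Proof.
move=> q0; rewrite /gS big_ord_recl /= muln0 expr0 lerDl.
by apply: sumr_ge0 => i _; rewrite exprn_ge0 // ltW.
Qed.

Lemma gS_le q x : 0 < q -> q <= 1 -> gS q x <= x.+1%:R.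
Proof.
move=> q0 q1; rewrite /gS.
have -> : (x.+1%:R : R) = \sum_(i < x.+1) 1 by rewrite sumr_const card_ord.
by apply: ler_sum => i _; rewrite exprn_ile1 // ltW.
Qed.

Lemma qdim_eq q k : 0 < q -> qdim q k = q^-1 ^+ (2 * k) * gS q (2 * k).
Proof. by move=> q0; rewrite /qdim qint_eq. Qed.

Lemma qdim_ge q k : 0 < q -> q^-1 ^+ (2 * k) <= qdim q k.
Proof.
move=> q0; rewrite qdim_eq // -[leLHS]mulr1 ler_wpM2l ?gS_ge1 //.
by rewrite exprn_ge0 // invr_ge0 ltW.
Qed.

Lemma qdim_le q k : 0 < q -> q <= 1 -> qdim q k <= (2 * k).+1%:R * q^-1 ^+ (2 * k).
Proof.
move=> q0 q1; rewrite qdim_eq // mulrC ler_wpM2r ?gS_le //.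
by rewrite exprn_ge0 // invr_ge0 ltW.
Qed.

Lemma qdim_ge0 q k : 0 < q -> 0 <= qdim q k.
Proof.
move=> q0; apply: le_trans (@qdim_ge q k q0).
by rewrite exprn_ge0 // invr_ge0 ltW.
Qed.

Lemma sizeB_lower q X n : 0 < q -> (0 < n)%N ->
  q^-1 ^+ (4 * (n * \max_(x <- X) x)) <= sizeB q X n.
Proof.
move=> q0 n0; rewrite /sizeB /Bbound.
set N := (n * \max_(x <- X) x)%N.
rewrite (bigD1 ord_max) /=; last exact: inB_top.
rewrite -[leLHS]addr0; apply: lerD; last by apply: sumr_ge0 => i _; rewrite exprn_ge0 // qdim_ge0.
rewrite (_ : (4 * N = (2 * N) * 2)%N); last by lia.
rewrite exprM lerXn2r // ?qdim_ge //.
  by rewrite nnegrE exprn_ge0 // invr_ge0 ltW.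
by rewrite nnegrE qdim_ge0.
Qed.

Lemma sizeB_upper q X n : 0 < q -> q <= 1 ->
  sizeB q X n <= ((n * \max_(x <- X) x).+1 * ((2 * (n * \max_(x <- X) x)).+1 ^ 2))%:R
                  * q^-1 ^+ (4 * (n * \max_(x <- X) x)).
Proof.
move=> q0 q1; rewrite /sizeB /Bbound.
set N := (n * \max_(x <- X) x)%N.
set C := ((2 * N).+1%:R * q^-1 ^+ (2 * N)) ^+ 2.
have -> : (N.+1 * (2 * N).+1 ^ 2)%:R * q^-1 ^+ (4 * N) = \sum_(i < N.+1) C.
  rewrite sumr_const card_ord /C exprMn -exprM (_ : (2 * N * 2 = 4 * N)%N); last by lia.
  by rewrite -mulr_natr natrM natrX; ring.
rewrite big_mkcond; apply: ler_sum => i _.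
have C0 : 0 <= C by rewrite /C exprn_ge0 // mulr_ge0 // exprn_ge0 // invr_ge0 ltW.
case: ifP => _ //.
have hi : (i <= N)%N by rewrite -ltnS.
have r0 : 0 <= q^-1 by rewrite invr_ge0 ltW.
rewrite /C lerXn2r // ?nnegrE ?qdim_ge0 ?mulr_ge0 ?exprn_ge0 //.
apply: le_trans (@qdim_le q i q0 q1) _.
apply: ler_pM; rewrite ?ler0n ?exprn_ge0 //.
  by rewrite ler_nat ltnS leq_mul2l.
by apply: ler_weXn2l; [exact: invq_ge1 | rewrite leq_mul2l hi orbT].
Qed.

Lemma bernoulli (e : R) n : 0 <= e -> 1 + n%:R * e <= (1 + e) ^+ n.
Proof.
move=> e0; elim: n => [|n IH]; first by rewrite mul0r addr0 expr0.
rewrite exprS; apply: le_trans (_ : (1 + e) * (1 + n%:R * e) <= _).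
  rewrite -natr1; have : 0 <= n%:R * e * e by rewrite mulr_ge0 // mulr_ge0.
  lra.
by rewrite ler_wpM2l // addr_ge0.
Qed.

Lemma powR_root (a : R) n : 0 <= a -> (0 < n)%N -> (a ^+ n) `^ (n%:R^-1) = a.
Proof.
move=> a0 n0; rewrite -powR_mulrn // -powRrM mulfV ?powRr1 //.
by rewrite pnatr_eq0 -lt0n.
Qed.

Lemma powR_root_le (a c : R) n : 0 <= a -> 0 <= c -> (0 < n)%N -> a <= c ^+ n ->
  a `^ (n%:R^-1) <= c.
Proof.
move=> a0 c0 n0 h; rewrite -{1}(@powR_root c n c0 n0).
apply: ge0_ler_powR => //; by rewrite nnegrE exprn_ge0.
Qed.

Lemma root_ge (a c : R) n : 0 <= c -> (0 < n)%N -> c ^+ n <= a ->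
  c <= a `^ (n%:R^-1).
Proof.
move=> c0 n0 h; rewrite -{1}(@powR_root c n c0 n0).
apply: ge0_ler_powR => //; rewrite nnegrE ?exprn_ge0 //.
by apply: le_trans h; rewrite exprn_ge0.
Qed.

Lemma quart_le (e : R) : 0 <= e -> e <= 1 -> (1 + e) ^+ 4 <= 1 + 15 * e.
Proof.
move=> e0 e1.
have h2 : e ^+ 2 <= e by rewrite expr2; nra.
have h3 : e ^+ 3 <= e ^+ 2.
  rewrite exprS; have := exprn_ge0 2 e0; nra.
have h4 : e ^+ 4 <= e ^+ 3.
  rewrite exprS; have := exprn_ge0 3 e0; nra.
have -> : (1 + e) ^+ 4 = 1 + 4 * e + 6 * e ^+ 2 + 4 * e ^+ 3 + e ^+ 4 by ring.
lra.
Qed.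

Lemma omegaX_eq q X : 0 < q -> q <= 1 -> omegaX q X = q^-1 ^+ (4 * \max_(x <- X) x).
Proof.
move=> q0 q1; set M := \max_(x <- X) x; set L := q^-1 ^+ (4 * M).
have r1 := @invq_ge1 q q0 q1.
have L1 : 1 <= L by rewrite /L exprn_ege1.
have L0 : 0 < L by apply: lt_le_trans L1.
rewrite /omegaX; apply: norm_cvg_lim; apply/cvgrPdist_le => eps eps0.
set K := ((2 * M).+1 ^ 3)%N.
set e := Num.min 1 (eps / (15 * L)).
have e0 : 0 < e by rewrite /e lt_min ltr01 /= divr_gt0 // mulr_gt0.
have e1 : e <= 1 by rewrite /e ge_min lexx.
have e2 : e * (15 * L) <= eps.
  by rewrite -ler_pdivlMr ?mulr_gt0 // /e ge_min lexx orbT.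
set N0 := maxn 1 (Num.Def.archi_bound (K%:R / e ^+ 4)).
apply: filterS (nbhs_infty_ge N0) => n hn.
have n0 : (0 < n)%N by apply: leq_trans hn; rewrite leq_maxl.
have hK : K%:R <= n%:R * e ^+ 4.
  rewrite -ler_pdivrMr ?exprn_gt0 //; apply: ltW.
  apply: lt_le_trans (archi_boundP _) _; first by rewrite divr_ge0 // exprn_ge0 // ltW.
  by rewrite ler_nat; apply: leq_trans hn; rewrite leq_maxr.
have Ln : L ^+ n = q^-1 ^+ (4 * (n * M)).
  by rewrite -exprM; congr (_ ^+ _); rewrite mulnCA mulnC.
have lo : L <= sizeB q X n `^ n%:R^-1.
  by apply: root_ge => //; [exact: ltW | rewrite Ln; exact: sizeB_lower].
have hi : sizeB q X n `^ n%:R^-1 <= (1 + e) ^+ 4 * L.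
  apply: powR_root_le => //.
  - by rewrite /sizeB; apply: sumr_ge0 => i _; rewrite exprn_ge0 // qdim_ge0.
  - by apply: mulr_ge0; [apply: exprn_ge0; rewrite addr_ge0 // ltW | exact: ltW].
  apply: le_trans (@sizeB_upper q X n q0 q1) _.
  have Ln0 : 0 <= L ^+ n by rewrite exprn_ge0 // ltW.
  rewrite -/M exprMn -Ln ler_wpM2r //.
  apply: le_trans (_ : (K * n ^ 3)%:R <= _).
    rewrite ler_nat.
    have hM : ((n * M).+1 <= n * (2 * M).+1)%N by nia.
    have hM2 : ((2 * (n * M)).+1 <= n * (2 * M).+1)%N by nia.
    have := leq_mul hM (leq_mul hM2 hM2).
    have -> : (n * (2 * M).+1 * (n * (2 * M).+1 * (n * (2 * M).+1)) = K * n ^ 3)%N.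
      by rewrite /K; ring.
    by rewrite (expnS _ 1) expn1.
  rewrite natrM natrX; apply: le_trans (_ : (n%:R * e) ^+ 4 <= _).
    rewrite (_ : (n%:R * e) ^+ 4 = (n%:R * e ^+ 4) * n%:R ^+ 3); last by ring.
    by rewrite ler_wpM2r // exprn_ge0.
  have e0' : 0 <= e by exact: ltW.
  rewrite -exprM mulnC exprM; apply: lerXn2r; rewrite ?nnegrE ?mulr_ge0 ?ler0n ?exprn_ge0 ?addr_ge0 //.
  apply: le_trans (bernoulli e n e0'); lra.
rewrite ler0_norm ?subr_le0 // opprB.
have := @quart_le e (ltW e0) e1; nra.
Qed.
End A.

Theorem proposition5p4 (R : realType) (q : R) (hq0 : 0 < q) (hq1 : q <= 1) :
  omega q = q ^- 4.
Proof.
rewrite -exprVn /omega.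
have r1 := @invq_ge1 R q hq0 hq1.
set S := (X in inf X).
have lb : lbound S (q^-1 ^+ 4).
  move=> y [X hX <-]; rewrite omegaX_eq //.
  by apply: ler_weXn2l => //; rewrite -[Y in (Y <= _)%N]muln1 leq_mul2l gen_max.
have mem : S (q^-1 ^+ 4).
  exists [:: 1%N]; first exact: gen1.
  by rewrite omegaX_eq // big_cons big_nil.
apply/eqP; rewrite eq_le; apply/andP; split.
  by apply: (ge_inf (ex_intro _ _ lb)).
by apply: lb_le_inf => //; exists (q^-1 ^+ 4).
Qed.
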